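(* Break the segment $[0,1]$ at two independent uniformly random points into three pieces, and let $A$ denote the area of the triangle with these three side lengths when it exists. Let $A_0 \in (0, \sqrt{3}/36)$. Then, given that a triangle can be formed, the probability that its area exceeds $A_0$ is \[ \mathbb P(A > A_0) = 4\int_{\mu_1}^{\mu_2} \sqrt{k^2(1-k^2)^2 - (8A_0)^2} \; dk, \] where $0 < \mu_1 < \mu_2 < 1$ are the two roots in $(0,1)$ of the polynomial $k(1-k^2) - 8A_0$.
   Context: Three lengths form a triangle iff each is less than the sum of the other two (equivalently, each is less than $1/2$ when they sum to $1$). *)

(* Defs.v *)
From HB Require Import structures.
From mathcomp Require Import all_boot all_order all_algebra.
From mathcomp Require Import all_classical all_reals all_analysis.
Set Implicit Arguments. Unset Strict Implicit. Unset Printing Implicit Defensive.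
Import Order.TTheory GRing.Theory Num.Theory.
Local Open Scope classical_set_scope.
Local Open Scope ring_scope.

Section Defs.
Variable R : realType.

Definition piece1 (x y : R) : R := Num.min x y.
Definition piece2 (x y : R) : R := `|x - y|.
Definition piece3 (x y : R) : R := 1 - Num.max x y.

Definition is_triangle (a b c : R) : Prop := a < b + c /\ b < a + c /\ c < a + b.

Definition heron_area (a b c : R) : R :=
  let s := (a + b + c) / 2 in Num.sqrt (s * (s - a) * (s - b) * (s - c)).

(* Sample space: the unit square, with two independent uniform points,
   i.e. the (product) Lebesgue measure restricted to [0,1]^2 (total mass 1). *)
Definition unit_square : set (R * R) := `[0, 1] `*` `[0, 1].

Definition uniform2 := ((@lebesgue_measure R) \x (@lebesgue_measure R))%E.

Definition triangle_event : set (R * R) :=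
  [set p | is_triangle (piece1 p.1 p.2) (piece2 p.1 p.2) (piece3 p.1 p.2)].

Definition area_gt_event (A0 : R) : set (R * R) :=
  [set p | A0 < heron_area (piece1 p.1 p.2) (piece2 p.1 p.2) (piece3 p.1 p.2)].

Definition cond_prob (E B : set (R * R)) : R :=
  fine (uniform2 (unit_square `&` B `&` E)) / fine (uniform2 (unit_square `&` B)).

End Defs.

(* Main.v *)
Set Warnings "-notation-overridden,-ambiguous-paths,-notation-incompatible-prefix,-deprecated".
Require Import Defs.
From HB Require Import structures.
From mathcomp Require Import all_boot all_order all_algebra.
From mathcomp Require Import all_classical all_reals all_analysis.
From mathcomp Require Import ring lra measurable_realfun.
Import Order.TTheory GRing.Theory Num.Theory.
Import numFieldNormedType.Exports.
Local Open Scope classical_set_scope.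
Local Open Scope ring_scope.
Section S.
Context {R : realType}.
Definition phi (k : R) : R := (1 - k ^+ 2) / 2.
Definition psi (k : R) : R := (1 + k ^+ 2) / 2.

Lemma phi_der : phi^`()%classic = fun k => - k.
Proof.
apply/funext => k; rewrite derive1E /phi.
rewrite deriveMr //= deriveB //= ?derive_cst ?exp_derive /=.
rewrite expr1 /GRing.scale /= mulr1 sub0r mulrN mulrA mulVf ?mul1r // pnatr_eq0.
Qed.
Lemma psi_der : psi^`()%classic = fun k => k.
Proof.
apply/funext => k; rewrite derive1E /psi.
rewrite deriveMr //= deriveD //= ?derive_cst ?exp_derive /=.
rewrite expr1 /GRing.scale /= mulr1 add0r mulrA mulVf ?mul1r // pnatr_eq0.
Qed.
Notation mu := (@lebesgue_measure R).
Lemma phi_cont : continuous phi.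
Proof.
move=> x; apply: differentiable_continuous; apply/derivable1_diffP.
rewrite /phi; apply: derivableM => //; apply: derivableB => //; exact: exprn_derivable.
Qed.
Lemma psi_cont : continuous psi.
Proof.
move=> x; apply: differentiable_continuous; apply/derivable1_diffP.
rewrite /psi; apply: derivableM => //; apply: derivableD => //; exact: exprn_derivable.
Qed.
Lemma opp_cont : continuous (fun x : R => - x).
Proof. by move=> x; apply: continuousN; exact: cvg_id. Qed.

Lemma subst_phi (G : R -> R) a b : 0 <= a -> a <= b ->
  {within `[phi b, phi a], continuous G} ->
  (\int[mu]_(x in `[phi b, phi a]) (G x)%:E =
   \int[mu]_(k in `[a, b]) (G (phi k) * k)%:E)%E.
Proof.
move=> a0 ab cG.
rewrite (@integration_by_substitution_decreasing _ phi G a b) //.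
- by apply: eq_integral => k _; rewrite phi_der /= opprK.
- move=> x y; rewrite !in_itv /= => /andP[ax _] /andP[ay _] xy.
  rewrite /phi; nra.
- rewrite phi_der => x _; exact: opp_cont.
- rewrite phi_der; apply/cvg_ex; exists (- a); apply: cvg_at_right_filter; exact: opp_cont.
- rewrite phi_der; apply/cvg_ex; exists (- b); apply: cvg_at_left_filter; exact: opp_cont.
- split.
  + move=> x _; rewrite /phi; apply: derivableM => //; apply: derivableB => //; exact: exprn_derivable.
  + apply: cvg_at_right_filter; exact: phi_cont.
  + apply: cvg_at_left_filter; exact: phi_cont.
Qed.

Lemma subst_psi (G : R -> R) a b : 0 <= a -> a <= b ->
  {within `[psi a, psi b], continuous G} ->
  (\int[mu]_(x in `[psi a, psi b]) (G x)%:E =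
   \int[mu]_(k in `[a, b]) (G (psi k) * k)%:E)%E.
Proof.
move=> a0 ab cG.
rewrite (@integration_by_substitution_increasing _ psi G a b) //.
- by apply: eq_integral => k _; rewrite psi_der.
- move=> x y; rewrite !in_itv /= => /andP[ax _] /andP[ay _] xy.
  rewrite /psi; nra.
- rewrite psi_der => x _; exact: cvg_id.
- rewrite psi_der; apply/cvg_ex; exists a; apply: cvg_at_right_filter; exact: cvg_id.
- rewrite psi_der; apply/cvg_ex; exists b; apply: cvg_at_left_filter; exact: cvg_id.
- split.
  + move=> x _; rewrite /psi; apply: derivableM => //; apply: derivableD => //; exact: exprn_derivable.
  + apply: cvg_at_right_filter; exact: psi_cont.
  + apply: cvg_at_left_filter; exact: psi_cont.
Qed.
Definition Gf (A x : R) : R := Num.sqrt (x ^+ 2 - (4 * A) ^+ 2 / (1 - 2 * x)).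

Lemma sqrt_lt (a P : R) : 0 <= a -> (a < Num.sqrt P) = (a ^+ 2 < P).
Proof.
move=> a0; case: (leP P 0) => hP.
  rewrite ler0_sqrtr //; apply/idP/idP => h; first lra.
  have : 0 <= a ^+ 2 by exact: sqr_ge0.
  lra.
rewrite {1}(_ : a = Num.sqrt (a ^+ 2)); last by rewrite sqrtr_sqr ger0_norm.
by rewrite ltr_sqrt; lra.
Qed.

Lemma abs_lt_sqrt (t v : R) : (`|t| < Num.sqrt v) = (t ^+ 2 < v).
Proof. by rewrite sqrt_lt // real_normK // num_real. Qed.

Lemma G_lt A x t : x < 1/2 ->
  (`|t| < Gf A x) = ((1 - 2 * x) * t ^+ 2 < (1 - 2 * x) * x ^+ 2 - (4 * A) ^+ 2).
Proof.
move=> hx; rewrite /Gf abs_lt_sqrt.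
have u0 : 0 < 1 - 2 * x by lra.
have -> : x ^+ 2 - (4 * A) ^+ 2 / (1 - 2 * x) =
   ((1 - 2 * x) * x ^+ 2 - (4 * A) ^+ 2) / (1 - 2 * x).
  by field; lra.
by rewrite ltr_pdivlMr // mulrC.
Qed.

Lemma heron1 (a b c : R) : a + b + c = 1 ->
  heron_area a b c = Num.sqrt ((1 - 2 * a) * (1 - 2 * b) * (1 - 2 * c) / 16).
Proof. by move=> h; rewrite /heron_area /= h; congr Num.sqrt; field. Qed.

Lemma core1 A x y : 0 <= A -> 0 <= x -> x < 1/2 -> x <= y ->
  (is_triangle x (y - x) (1 - y) /\
     A < heron_area x (y - x) (1 - y)) <-> `|1 + x - 2 * y| < Gf A x.
Proof.
move=> A0 x0 x2 xy.
rewrite heron1; last by ring.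
rewrite sqrt_lt // G_lt // /is_triangle.
split.
  move=> [[h1 [h2 h3]] h4]; nra.
move=> h; have u0 : 0 < 1 - 2 * x by lra.
have hA : 0 <= A ^+ 2 by exact: sqr_ge0.
have ht : (1 + x - 2 * y) ^+ 2 < x ^+ 2 by nra.
split; [split; [lra|split]|]; nra.
Qed.

Lemma core2 A x y : 0 <= A -> 0 <= x -> x < 1/2 -> y < x ->
  ~ (is_triangle y (x - y) (1 - x)) /\ ~ (`|1 + x - 2 * y| < Gf A x).
Proof.
move=> A0 x0 x2 yx; split.
  by rewrite /is_triangle => -[_ [_ h]]; lra.
rewrite G_lt // => h.
have hA : 0 <= A ^+ 2 by exact: sqr_ge0.
have u0 : 0 < 1 - 2 * x by lra.
have ht : (1 + x - 2 * y) ^+ 2 < x ^+ 2 by nra.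
have h1 : 0 < 1 + x - 2 * y - x by lra.
have h2 : 0 < 1 + x - 2 * y + x by lra.
nra.
Qed.
Lemma leb_abs (c g : R) : 0 <= g -> mu [set y | `|c - 2 * y| < g] = g%:E.
Proof.
move=> g0.
have -> : [set y | `|c - 2 * y| < g] = `](c - g) / 2, (c + g) / 2[%classic.
  apply/seteqP; split => y /=; rewrite in_itv /= ltr_norml => /andP[h1 h2];
    apply/andP; split; lra.
rewrite lebesgue_measure_itv /= lte_fin.
case: ifPn => h.
  by rewrite -EFinB; congr EFin; field.
by congr EFin; lra.
Qed.
Definition SA (A : R) : set (R * R) :=
  (@unit_square R) `&` (@triangle_event R) `&` area_gt_event A.

Lemma memS A x y : SA A (x, y) <->
  [/\ 0 <= x <= 1, 0 <= y <= 1,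
      is_triangle (piece1 x y) (piece2 x y) (piece3 x y) &
      A < heron_area (piece1 x y) (piece2 x y) (piece3 x y)].
Proof.
rewrite /SA /unit_square /triangle_event /area_gt_event /=.
split.
  by move=> [[[/= h1 h2] h3] h4]; move: h1 h2; rewrite !in_itv /= => h1 h2.
by move=> [h1 h2 h3 h4]; split => //; split => //; split => /=; rewrite in_itv /=.
Qed.

Lemma pieces_le {x y : R} : x <= y ->
  [/\ piece1 x y = x, piece2 x y = y - x & piece3 x y = 1 - y].
Proof.
move=> xy; rewrite /piece1 /piece2 /piece3 min_l // max_r //.
by rewrite distrC ger0_norm // subr_ge0.
Qed.

Lemma pieces_ge {x y : R} : y <= x ->
  [/\ piece1 x y = y, piece2 x y = x - y & piece3 x y = 1 - x].
Proof.
move=> xy; rewrite /piece1 /piece2 /piece3 min_r // max_l //.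
by rewrite ger0_norm // subr_ge0.
Qed.

Lemma sec_left A x y : 0 <= A -> 0 <= x -> x < 1/2 ->
  SA A (x, y) <-> `|1 + x - 2 * y| < Gf A x.
Proof.
move=> A0 x0 x2; rewrite memS.
case: (leP x y) => xy.
  have [-> -> ->] := pieces_le xy.
  split; first by move=> [_ _ h1 h2]; apply/(@core1 A x y A0 x0 x2 xy).
  move/(@core1 A x y A0 x0 x2 xy) => [h1 h2]; split => //.
    by apply/andP; split; lra.
  by move: h1; rewrite /is_triangle => -[t1 [t2 t3]]; apply/andP; split; lra.
have [-> -> ->] := pieces_ge (ltW xy).
have [n1 n2] := @core2 A x y A0 x0 x2 xy.
by split => // -[_ _ h _].
Qed.

Lemma SA_sym A x y : SA A (x, y) <-> SA A (1 - x, 1 - y).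
Proof.
rewrite !memS.
have key : forall a b c : R, heron_area c b a = heron_area a b c.
  by move=> a b c; rewrite /heron_area /=; congr Num.sqrt; ring.
have keyt : forall a b c : R, is_triangle c b a <-> is_triangle a b c.
  by move=> a b c; rewrite /is_triangle; split => -[h1 [h2 h3]]; (repeat split); lra.
have [p1 p2 p3] : [/\ piece1 (1 - x) (1 - y) = piece3 x y,
   piece2 (1 - x) (1 - y) = piece2 x y & piece3 (1 - x) (1 - y) = piece1 x y].
  case: (leP x y) => xy.
    have [-> -> ->] := pieces_le xy.
    have h : 1 - y <= 1 - x by lra.
    have [-> -> ->] := pieces_ge h.
    split => //; ring.
  have [-> -> ->] := pieces_ge (ltW xy).
  have h : 1 - x <= 1 - y by lra.
  have [-> -> ->] := pieces_le h.
  split => //; ring.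
rewrite p1 p2 p3 key.
split => -[/andP[h1 h1'] /andP[h2 h2'] h3 h4];
  (split; [apply/andP; split; lra | apply/andP; split; lra | exact/keyt | done]).
Qed.
Definition gE (A x : R) : R :=
  if (0 <= x) && (x < 1/2) then Gf A x
  else if (1/2 < x) && (x <= 1) then Gf A (1 - x) else 0.

Lemma Gf_ge0 A x : 0 <= Gf A x.
Proof. exact: sqrtr_ge0. Qed.

Lemma sec_meas A x : 0 <= A -> mu (xsection (SA A) x) = (gE A x)%:E.
Proof.
move=> A0; rewrite /gE; case: ifPn => [/andP[x0 x2]|h1].
  have -> : xsection (SA A) x = [set y | `|(1 + x) - 2 * y| < Gf A x].
    apply/seteqP; split => y; rewrite /xsection /= in_setE.
      by move/(@sec_left A x y A0 x0 x2).
    by move/(@sec_left A x y A0 x0 x2).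
  exact/leb_abs/Gf_ge0.
case: ifPn => [/andP[x2 x1]|h2].
  have x0' : 0 <= 1 - x by lra.
  have x2' : 1 - x < 1/2 by lra.
  have -> : xsection (SA A) x = [set y | `|x - 2 * y| < Gf A (1 - x)].
    apply/seteqP; split => y; rewrite /xsection /= in_setE.
      move/SA_sym/(@sec_left A (1 - x) (1 - y) A0 x0' x2').
      by rewrite (_ : 1 + (1 - x) - 2 * (1 - y) = -(x - 2 * y)) ?normrN //; ring.
    move=> h; apply/SA_sym/(@sec_left A (1 - x) (1 - y) A0 x0' x2').
    by rewrite (_ : 1 + (1 - x) - 2 * (1 - y) = -(x - 2 * y)) ?normrN //; ring.
  exact/leb_abs/Gf_ge0.
have -> : xsection (SA A) x = set0; last exact: measure0.
apply/seteqP; split => y //; rewrite /xsection /= in_setE.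
move/memS => -[/andP[xa xb] _ tri _].
have hx : x = 1/2.
  move: h1 h2; rewrite negb_and negb_and -!real_ltNge ?num_real // -!real_leNgt ?num_real //.
  move=> /orP[h|h] /orP[h'|h']; lra.
move: tri; rewrite /is_triangle hx.
case: (leP (1/2) y) => xy.
  by have [-> -> ->] := pieces_le xy; move=> [t _]; lra.
by have [-> -> ->] := pieces_ge (ltW xy); move=> [_ [_ t]]; lra.
Qed.
Lemma onem_cont : continuous (fun x : R => 1 - x).
Proof. by move=> x; apply: continuousB; [exact: cvg_cst | exact: cvg_id]. Qed.

Lemma int_split A a b : 0 <= A -> 0 <= a -> a <= b -> b <= 1 ->
  (forall x, 0 <= x -> x < 1/2 -> ~ (phi b < x < phi a) -> Gf A x = 0) ->
  (forall x, phi b <= x <= phi a -> {for x, continuous (Gf A)}) ->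
  uniform2 (SA A) = (\int[mu]_(k in `[a, b]) (Gf A (phi k) * k)%:E +
                     \int[mu]_(k in `[a, b]) (Gf A (phi k) * k)%:E)%E.
Proof.
move=> A0 a0 ab b1 hz hc.
have pb0 : 0 <= phi b by rewrite /phi; nra.
have pa2 : phi a <= 1/2 by rewrite /phi; nra.
have pbpa : phi b <= phi a by rewrite /phi; nra.
have qa : psi a = 1 - phi a by rewrite /phi /psi; field.
have qb : psi b = 1 - phi b by rewrite /phi /psi; field.
pose D1 := `]phi b, phi a[%classic.
pose D2 := `]psi a, psi b[%classic.
have cG : {in D1, continuous (Gf A)}.
  move=> x; rewrite inE /D1 /= in_itv /= => /andP[h1 h2]; apply: hc; lra.
have cG2 : {in D2, continuous (fun x : R => Gf A (1 - x))}.
  move=> x; rewrite inE /D2 /= in_itv /= => /andP[h1 h2].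
  apply: (continuous_comp (f := fun x : R => 1 - x)); first exact: onem_cont.
  apply: hc; lra.
have mG : measurable_fun D1 (EFin \o Gf A).
  apply/measurable_EFinP; apply: open_continuous_measurable_fun => //.
  idtac.
have mG2 : measurable_fun D2 (EFin \o (fun x : R => Gf A (1 - x))).
  apply/measurable_EFinP; apply: open_continuous_measurable_fun => //.
  idtac.
have -> : uniform2 (SA A) = (\int[mu]_x mu (xsection (SA A) x))%E by [].

under eq_integral do rewrite sec_meas //.
transitivity (\int[mu]_(x in D1 `|` D2) (gE A x)%:E)%E.
  rewrite [RHS]integral_mkcond; apply: eq_integral => x _.
  rewrite /patch; case: ifPn => // /negP; rewrite in_setE => hx.
  have h0 : forall z : \bar R, z = 0%E -> z = point by move=> z ->.
  apply: h0.
  rewrite /gE; case: ifPn => [/andP[x0 x2]|_].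
    rewrite hz //; move=> h; apply: hx; left.
    by rewrite /D1 /= in_itv /= h.
  case: ifPn => [/andP[x0 x2]|_] //.
  rewrite hz //; try lra; move=> h; apply: hx; right.
  rewrite /D2 /= in_itv /= qa qb; apply/andP; split; lra.
rewrite ge0_integral_setU //; first last.
- apply/disj_setPS => x [] /=; rewrite /D1 /D2 /= !in_itv /= qa qb.
  by move=> /andP[h1 h2] /andP[h3 h4]; lra.
- by move=> x _; rewrite lee_fin /gE; case: ifPn => _; [exact: Gf_ge0|case: ifPn => _ //; exact: Gf_ge0].
- have mD1 : measurable D1 by exact: measurable_itv.
  have mD2 : measurable D2 by exact: measurable_itv.
  apply/(measurable_funU _ mD1 mD2); split.
  + apply: eq_measurable_fun mG => x; rewrite inE /D1 /= in_itv /= => /andP[h1 h2].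
    by rewrite /gE /= ifT //; apply/andP; split; lra.
  + apply: eq_measurable_fun mG2 => x; rewrite inE /D2 /= in_itv /= qa qb => /andP[h1 h2].
    rewrite /gE /= ifF; last by apply/negbTE; rewrite negb_and -!real_ltNge ?num_real //; apply/orP; right; lra.
    by rewrite ifT //; apply/andP; split; lra.
- exact: measurable_itv.
- exact: measurable_itv.
have sD1 : forall x, D1 x -> 0 < x < 1/2.
  by move=> x; rewrite /D1 /= in_itv /= => /andP[h1 h2]; apply/andP; split; lra.
have sD2 : forall x, D2 x -> 1/2 < x < 1.
  by move=> x; rewrite /D2 /= in_itv /= qa qb => /andP[h1 h2]; apply/andP; split; lra.
congr (_ + _)%E.
  transitivity (\int[mu]_(x in D1) (Gf A x)%:E)%E.
    apply: eq_integral => x; rewrite inE => /sD1 /andP[h1 h2].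
    by rewrite /gE ifT //; apply/andP; split; lra.
  rewrite -(@integral_itv_bndoo R (phi b) (phi a) (EFin \o Gf A) true false mG).
  apply: subst_phi => //.
  apply: continuous_in_subspaceT => x; rewrite inE /= in_itv /= => hx.
  exact: hc.
transitivity (\int[mu]_(x in D2) (Gf A (1 - x))%:E)%E.
  apply: eq_integral => x; rewrite inE => /sD2 /andP[h1 h2].
  rewrite /gE ifF; last by apply/negbTE; rewrite negb_and -!real_ltNge ?num_real //; apply/orP; right; lra.
  by rewrite ifT //; apply/andP; split; lra.
rewrite -(@integral_itv_bndoo R (psi a) (psi b) (EFin \o (fun x => Gf A (1 - x))) true false mG2).
rewrite subst_psi //.
  apply: eq_integral => k _; congr (EFin (Gf A _ * k)); by rewrite /phi /psi; field.
apply: continuous_in_subspaceT => x; rewrite inE /= in_itv /= qa qb => /andP[h1 h2].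
apply: (continuous_comp (f := fun x : R => 1 - x)); first exact: onem_cont.
apply: hc; apply/andP; split; lra.
Qed.
Lemma poly_cont (f : R -> R) : (forall x, derivable f x 1) -> continuous f.
Proof.
move=> df x; apply: differentiable_continuous; apply/derivable1_diffP; exact: df.
Qed.

Lemma G_cont A x : 1 - 2 * x != 0 -> {for x, continuous (Gf A)}.
Proof.
move=> hx; rewrite /Gf.
apply: (continuous_comp (f := fun x : R => x ^+ 2 - (4 * A) ^+ 2 / (1 - 2 * x))
   (g := Num.sqrt)); last exact: sqrt_continuous.
apply: continuousB.
  by apply: (@poly_cont (fun x : R => x ^+ 2)) => z; exact: exprn_derivable.
apply: continuousM; first exact: cvg_cst.
apply: continuousV => //.
by apply: (@poly_cont (fun x : R => 1 - 2 * x)) => z.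
Qed.
Lemma poly_fact (o x m1 m2 : R) : o = m1 ^+ 2 + m1 * m2 + m2 ^+ 2 ->
  x ^+ 2 * (o - 2 * x) - (m1 * m2 * (m1 + m2)) ^+ 2 / 4 =
  -2 * (x - (o - m1 ^+ 2) / 2) * (x - (o - m2 ^+ 2) / 2) * (x + m1 * m2 / 2).
Proof. by move=> ->; field. Qed.

Lemma roots_facts (A0 mu1 mu2 : R) : mu1 < mu2 ->
  mu1 * (1 - mu1 ^+ 2) - 8 * A0 = 0 ->
  mu2 * (1 - mu2 ^+ 2) - 8 * A0 = 0 ->
  1 = mu1 ^+ 2 + mu1 * mu2 + mu2 ^+ 2 /\ 8 * A0 = mu1 * mu2 * (mu1 + mu2).
Proof.
move=> m12 h1 h2.
have hq : 1 = mu1 ^+ 2 + mu1 * mu2 + mu2 ^+ 2.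
  have : (mu1 - mu2) * (1 - (mu1 ^+ 2 + mu1 * mu2 + mu2 ^+ 2)) = 0.
    rewrite (_ : _ * _ = (mu1 * (1 - mu1 ^+ 2) - 8 * A0) - (mu2 * (1 - mu2 ^+ 2) - 8 * A0)).
      by rewrite h1 h2 subrr.
    ring.
  move/eqP; rewrite mulf_eq0 => /orP[/eqP h|/eqP h]; lra.
split => //.
have : 8 * A0 = mu1 * ((mu1 ^+ 2 + mu1 * mu2 + mu2 ^+ 2) - mu1 ^+ 2).
  by rewrite -hq; lra.
move=> ->; ring.
Qed.

Lemma zero_cond (A0 mu1 mu2 : R) : 0 < mu1 -> mu1 < mu2 ->
  mu1 * (1 - mu1 ^+ 2) - 8 * A0 = 0 ->
  mu2 * (1 - mu2 ^+ 2) - 8 * A0 = 0 ->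
  forall x, 0 <= x -> x < 1/2 -> ~ (phi mu2 < x < phi mu1) -> Gf A0 x = 0.
Proof.
move=> m10 m12 h1 h2 x x0 x2 hn.
have [hq h8] := @roots_facts A0 mu1 mu2 m12 h1 h2.
rewrite /Gf ler0_sqrtr //.
have u0 : 0 < 1 - 2 * x by lra.
have -> : x ^+ 2 - (4 * A0) ^+ 2 / (1 - 2 * x) =
   (x ^+ 2 * (1 - 2 * x) - (mu1 * mu2 * (mu1 + mu2)) ^+ 2 / 4) / (1 - 2 * x).
  rewrite -h8; field; lra.
rewrite pmulr_lle0 ?invr_gt0 // (@poly_fact 1 x mu1 mu2 hq).
have hp : phi mu2 < phi mu1 by rewrite /phi; nra.
have hx3 : 0 < x + mu1 * mu2 / 2 by nra.
have : 0 <= (x - phi mu1) * (x - phi mu2).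
  case: (leP x (phi mu2)) => h; first by nra.
  case: (leP (phi mu1) x) => h'; first by nra.
  by exfalso; apply: hn; apply/andP.
rewrite /phi => hh; nra.
Qed.
Lemma G0 x : Gf 0 x = `|x|.
Proof. by rewrite /Gf mulr0 expr0n /= mul0r subr0 sqrtr_sqr. Qed.

Lemma G0_cont : continuous (Gf 0).
Proof.
have -> : Gf 0 = Num.sqrt \o (fun x : R => x ^+ 2).
  by apply/funext => x; rewrite /Gf /= mulr0 expr0n /= mul0r subr0.
move=> x; apply: continuous_comp; last exact: sqrt_continuous.
by apply: (@poly_cont (fun x : R => x ^+ 2)) => z; exact: exprn_derivable.
Qed.

Definition Fq (k : R) : R := k ^+ 2 / 4 - k ^+ 4 / 8.

Lemma Fq_der k : Fq^`()%classic k = phi k * k.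
Proof.
rewrite derive1E /Fq.
rewrite deriveB //=.
rewrite deriveMr //=.
rewrite deriveMr //=.
rewrite !exp_derive /= /GRing.scale /= /phi; by field.
Qed.

Lemma tri_eq : (@unit_square R) `&` (@triangle_event R) = SA 0.
Proof.
apply/seteqP; split => -[x y]; last by move=> [].
move=> [hs ht]; split => //.
rewrite /area_gt_event /=.
move: hs ht; rewrite /unit_square /triangle_event /= !in_itv /= => -[/andP[x0 x1] /andP[y0 y1]].
have hsum : piece1 x y + piece2 x y + piece3 x y = 1.
  case: (leP x y) => xy.
    by have [-> -> ->] := pieces_le xy; ring.
  by have [-> -> ->] := pieces_ge (ltW xy); ring.
rewrite heron1 // /is_triangle => -[t1 [t2 t3]].
rewrite sqrtr_gt0; apply: divr_gt0 => //.
apply: mulr_gt0; first apply: mulr_gt0; lra.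
Qed.

Lemma muT : uniform2 ((@unit_square R) `&` (@triangle_event R)) = (1/4)%:E.
Proof.
rewrite tri_eq (@int_split 0 0 1) //; last 2 first.
- move=> x x0 x2 hn; rewrite G0; apply/normr0P/eqP.
  case: (leP x 0) => h; first lra.
  by exfalso; apply: hn; rewrite /phi; apply/andP; split; lra.
- by move=> x _; exact: G0_cont.
have -> : (\int[mu]_(k in `[0%R, 1%R]) (Gf 0 (phi k) * k)%:E =
           \int[mu]_(k in `[0%R, 1%R]) (phi k * k)%:E)%E.
  apply: eq_integral => k; rewrite inE /= in_itv /= => /andP[k0 k1].
  by rewrite G0 ger0_norm // /phi; nra.
rewrite (@continuous_FTC2 _ _ Fq) //.
- by rewrite -EFinD; congr EFin; rewrite /Fq; field.
- apply: continuous_subspaceT.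
  by apply: (@poly_cont (fun k => phi k * k)) => z; rewrite /phi.
- split.
  + by move=> z _; rewrite /Fq.
  + apply: cvg_at_right_filter; exact: (@poly_cont Fq).
  + apply: cvg_at_left_filter; exact: (@poly_cont Fq).
- by move=> z _; rewrite Fq_der.
Qed.
Lemma integrand_eq A0 k : 0 < k ->
  Gf A0 (phi k) * k = 2^-1 * Num.sqrt (k ^+ 2 * (1 - k ^+ 2) ^+ 2 - (8 * A0) ^+ 2).
Proof.
move=> k0; rewrite /Gf.
have e : 1 - 2 * phi k = k ^+ 2 by rewrite /phi; field.
rewrite e.
rewrite -[X in _ * X](ger0_norm (ltW k0)) -sqrtr_sqr mulrC -sqrtrM ?sqr_ge0 //.
have -> : k ^+ 2 * ((phi k) ^+ 2 - (4 * A0) ^+ 2 / k ^+ 2) =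
          (2^-1) ^+ 2 * (k ^+ 2 * (1 - k ^+ 2) ^+ 2 - (8 * A0) ^+ 2).
  by rewrite /phi; field; rewrite gt_eqF.
by rewrite sqrtrM ?sqr_ge0 // sqrtr_sqr ger0_norm // invr_ge0.
Qed.
End S.

Theorem mainTheorem2 (R : realType) (A0 mu1 mu2 : R) :
  0 < A0 -> A0 < Num.sqrt 3 / 36 ->
  0 < mu1 -> mu1 < mu2 -> mu2 < 1 ->
  mu1 * (1 - mu1 ^+ 2) - 8 * A0 = 0 ->
  mu2 * (1 - mu2 ^+ 2) - 8 * A0 = 0 ->
  (forall k : R, 0 < k -> k < 1 -> k * (1 - k ^+ 2) - 8 * A0 = 0 ->
     k = mu1 \/ k = mu2) ->
  ((cond_prob (area_gt_event A0) (@triangle_event R))%:E =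
   4%:E * \int[lebesgue_measure]_(k in `[mu1, mu2])
            (Num.sqrt (k ^+ 2 * (1 - k ^+ 2) ^+ 2 - (8 * A0) ^+ 2))%:E)%E.
Proof.
move=> A0p _ m10 m12 m21 h1 h2 _.
pose Sf := fun k : R => Num.sqrt (k ^+ 2 * (1 - k ^+ 2) ^+ 2 - (8 * A0) ^+ 2).
have cS : continuous Sf.
  move=> x; apply: (continuous_comp
     (f := fun k : R => k ^+ 2 * (1 - k ^+ 2) ^+ 2 - (8 * A0) ^+ 2)
     (g := Num.sqrt)); last exact: sqrt_continuous.
  apply: (@poly_cont R (fun k : R => k ^+ 2 * (1 - k ^+ 2) ^+ 2 - (8 * A0) ^+ 2)) => z.
  apply: derivableB => //; apply: derivableM; try exact: exprn_derivable.
have Iint : (@lebesgue_measure R).-integrable `[mu1, mu2] (EFin \o Sf).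
  apply: continuous_compact_integrable; first exact: segment_compact.
  exact: continuous_subspaceT.
have Ifin : (\int[lebesgue_measure]_(k in `[mu1, mu2]) (Sf k)%:E)%E \is a fin_num.
  by apply: integrable_fin_num => //.
have hE : uniform2 (SA A0) =
   (\int[lebesgue_measure]_(k in `[mu1, mu2]) (Sf k)%:E)%E.
  have pm2 : 0 < phi mu2 by rewrite /phi; nra.
  have pm1 : phi mu1 < 1/2 by rewrite /phi; nra.
  rewrite (@int_split R A0 mu1 mu2); first last.
  - move=> x /andP[x1 x2]; apply: G_cont; apply/eqP => h; lra.
  - exact: (@zero_cond R A0 mu1 mu2 m10 m12 h1 h2).
  - lra.
  - lra.
  - lra.
  - lra.
  have -> : (\int[lebesgue_measure]_(k in `[mu1, mu2]) (Gf A0 (phi k) * k)%:E =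
             (2^-1)%:E * \int[lebesgue_measure]_(k in `[mu1, mu2]) (Sf k)%:E)%E.
    rewrite -ge0_integralZl_EFin //.
    - apply: eq_integral => k; rewrite inE /= in_itv /= => /andP[k1 k2].
      rewrite integrand_eq //; lra.
    - by move=> k _; rewrite lee_fin /Sf sqrtr_ge0.
    - by move/integrableP : Iint => [].
  by rewrite -(fineK Ifin) -!EFinM -EFinD; congr EFin; field.
rewrite /cond_prob.
change ((@unit_square R) `&` (@triangle_event R) `&` area_gt_event A0) with (SA A0).
rewrite hE muT -(fineK Ifin) /= -EFinM; congr EFin.
by field.
Qed.
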